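(* Let $M$ be a Riemannian manifold with retraction $R$, let $f:M\to\mathbb{R}$ be smooth, and let $0<c_1<c_2<1/2$. Let $(x_k,\eta_k,\alpha_k)$ be generated by the scaled Fletcher–Reeves conjugate gradient method described in the context, and assume $\operatorname{grad} f(x_k)\neq 0$ for all $k$. Then for every $k\ge 0$, $\eta_k$ is a descent direction and \[ -\frac{1}{1-c_2}\le \frac{\langle \operatorname{grad} f(x_k),\eta_k\rangle_{x_k}}{\|\operatorname{grad} f(x_k)\|_{x_k}^2}\le \frac{2c_2-1}{1-c_2}. \]
   Context: A retraction on $M$ is a smooth map $R:TM\to M$ with $R_x(0_x)=x$ and $\mathrm{D}R_x(0_x)=\mathrm{id}_{T_xM}$, where $R_x=R|_{T_xM}$. The differentiated retraction is $\mathcal{T}^R_{\eta}(\xi):=\mathrm{D}R_x(\eta)[\xi]\in T_{R_x(\eta)}M$ for $\eta,\xi\in T_xM$. The associated scaled vector transport is $\mathcal{T}^0_{\eta}(\xi):=\dfrac{\|\xi\|_x}{\|\mathcal{T}^R_\eta(\xi)\|_{R_x(\eta)}}\mathcal{T}^R_\eta(\xi)$. Strong Wolfe conditions for $\alpha_k>0$ at $(x_k,\eta_k)$ with constants $c_1,c_2$: $f(R_{x_k}(\alpha_k\eta_k))\le f(x_k)+c_1\alpha_k\langle \operatorname{grad} f(x_k),\eta_k\rangle_{x_k}$ and $|\langle \operatorname{grad} f(R_{x_k}(\alpha_k\eta_k)),\mathcal{T}^R_{\alpha_k\eta_k}(\eta_k)\rangle_{R_{x_k}(\alpha_k\eta_k)}|\le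 c_2|\langle \operatorname{grad} f(x_k),\eta_k\rangle_{x_k}|$. Scaled Fletcher–Reeves method: choose $x_0\in M$, set $\eta_0=-\operatorname{grad} f(x_0)$; for $k=0,1,2,\dots$: choose $\alpha_k>0$ satisfying the strong Wolfe conditions with $0<c_1<c_2<1/2$, set $x_{k+1}=R_{x_k}(\alpha_k\eta_k)$, $\beta_{k+1}=\|\operatorname{grad} f(x_{k+1})\|^2_{x_{k+1}}/\|\operatorname{grad} f(x_k)\|^2_{x_k}$, and $\eta_{k+1}=-\operatorname{grad} f(x_{k+1})+\beta_{k+1}\mathcal{T}^{(k)}_{\alpha_k\eta_k}(\eta_k)$, where $\mathcal{T}^{(k)}_{\alpha_k\eta_k}(\eta_k)=\mathcal{T}^R_{\alpha_k\eta_k}(\eta_k)$ if $\|\mathcal{T}^R_{\alpha_k\eta_k}(\eta_k)\|_{x_{k+1}}\le\|\eta_k\|_{x_k}$, and $\mathcal{T}^{(k)}_{\alpha_k\eta_k}(\eta_k)=\mathcal{T}^0_{\alpha_k\eta_k}(\eta_k)$ otherwise. *)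

(* Defs.v *)
From Stdlib Require Import Reals.
Open Scope R_scope.
Set Implicit Arguments.

Record RiemMfd := {
  pt : Type;
  tv : pt -> Type;
  tzero : forall x, tv x;
  tadd : forall x, tv x -> tv x -> tv x;
  tscal : forall x, R -> tv x -> tv x;
  tinner : forall x, tv x -> tv x -> R;
  tadd_assoc : forall x (u v w : tv x), tadd u (tadd v w) = tadd (tadd u v) w;
  tadd_comm : forall x (u v : tv x), tadd u v = tadd v u;
  tadd_zero : forall x (u : tv x), tadd u (tzero x) = u;
  tadd_opp : forall x (u : tv x), tadd u (tscal (-1) u) = tzero x;
  tscal_one : forall x (u : tv x), tscal 1 u = u;
  tscal_assoc : forall x a b (u : tv x), tscal a (tscal b u) = tscal (a * b) u;
  tscal_addv : forall x a (u v : tv x), tscal a (tadd u v) = tadd (tscal a u) (tscal a v);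
  tscal_adds : forall x a b (u : tv x), tscal (a + b) u = tadd (tscal a u) (tscal b u);
  tinner_sym : forall x (u v : tv x), tinner u v = tinner v u;
  tinner_add : forall x (u v w : tv x), tinner (tadd u v) w = tinner u w + tinner v w;
  tinner_scal : forall x a (u v : tv x), tinner (tscal a u) v = a * tinner u v;
  tinner_pos : forall x (u : tv x), u <> tzero x -> 0 < tinner u u
}.

Arguments tzero {_} x.
Arguments tadd {_ x}.
Arguments tscal {_ x}.
Arguments tinner {_ x}.

Definition tnorm {M : RiemMfd} {x : pt M} (u : tv M x) : R := sqrt (tinner u u).

(* A retraction R : TM -> M together with its differential
   DR_x(eta)[xi] (the differentiated retraction T^R_eta(xi)). *)
Record Retraction (M : RiemMfd) := {
  retr : forall x : pt M, tv M x -> pt M;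
  dretr : forall (x : pt M) (eta : tv M x), tv M x -> tv M (retr x eta);
  retr_zero : forall x, retr x (tzero x) = x;
  dretr_add : forall x eta (u v : tv M x), dretr x eta (tadd u v) = tadd (dretr x eta u) (dretr x eta v);
  dretr_scal : forall x eta a (u : tv M x), dretr x eta (tscal a u) = tscal a (dretr x eta u);
  dretr_zero : forall x (xi : tv M x),
      eq_rect (retr x (tzero x)) (tv M) (dretr x (tzero x) xi) x (retr_zero x) = xi
}.

Arguments retr {_} _ x.
Arguments dretr {_} _ x.

(* g is the Riemannian gradient of f: for every x and xi in T_x M,
   d/dt f(R_x(t xi)) at t=0 equals <g x, xi>_x (= Df(x)[xi], since DR_x(0)=id). *)
Definition is_riem_grad (M : RiemMfd) (Rt : Retraction M) (f : pt M -> R)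
  (g : forall x, tv M x) : Prop :=
  forall (x : pt M) (xi : tv M x),
    derivable_pt_lim (fun t => f (retr Rt x (tscal t xi))) 0 (tinner (g x) xi).

Definition sfr_transport (M : RiemMfd) (Rt : Retraction M) (x : pt M)
  (a : R) (eta : tv M x) : tv M (retr Rt x (tscal a eta)) :=
  let TR := dretr Rt x (tscal a eta) eta in
  if Rle_dec (tnorm TR) (tnorm eta) then TR
  else tscal (tnorm eta / tnorm TR) TR.

Definition strong_wolfe (M : RiemMfd) (Rt : Retraction M) (f : pt M -> R)
  (g : forall x, tv M x) (c1 c2 : R) (x : pt M) (eta : tv M x) (a : R) : Prop :=
  f (retr Rt x (tscal a eta)) <= f x + c1 * a * tinner (g x) eta /\
  Rabs (tinner (g (retr Rt x (tscal a eta))) (dretr Rt x (tscal a eta) eta))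
    <= c2 * Rabs (tinner (g x) eta).

Definition sfr_sequence (M : RiemMfd) (Rt : Retraction M) (f : pt M -> R)
  (g : forall x, tv M x) (c1 c2 : R)
  (xs : nat -> pt M) (etas : forall k, tv M (xs k)) (alphas : nat -> R) : Prop :=
  etas 0%nat = tscal (-1) (g (xs 0%nat)) /\
  forall k : nat,
    0 < alphas k /\
    strong_wolfe Rt f g c1 c2 (xs k) (etas k) (alphas k) /\
    exists hx : xs (S k) = retr Rt (xs k) (tscal (alphas k) (etas k)),
      etas (S k) =
        eq_rect_r (tv M)
          (let beta := tinner (g (xs (S k))) (g (xs (S k)))
                       / tinner (g (xs k)) (g (xs k)) in
           tadd (tscal (-1) (g (retr Rt (xs k) (tscal (alphas k) (etas k)))))
                (tscal beta (sfr_transport Rt (xs k) (alphas k) (etas k))))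
          hx.

(* Main.v *)
Require Import Defs.
From Stdlib Require Import Reals Lra Psatz.
Open Scope R_scope.

Lemma step_arith (c2 u v : R) : 0 < c2 -> c2 < 1/2 ->
  - (1 / (1 - c2)) <= u -> u <= (2 * c2 - 1) / (1 - c2) ->
  Rabs v <= c2 * Rabs u ->
  - (1 / (1 - c2)) <= -1 + v /\ -1 + v <= (2 * c2 - 1) / (1 - c2).
Proof.
  intros h0 h1 hl hu hv.
  assert (e : (2 * c2 - 1) / (1 - c2) = (2*c2 - 1) * (1 / (1 - c2))) by (field; lra).
  rewrite e in *.
  set (t := 1 / (1 - c2)) in *.
  assert (ht : t * (1 - c2) = 1) by (unfold t; field; lra).
  assert (tpos : 0 < t) by (unfold t; apply Rdiv_lt_0_compat; lra).
  assert (un : u < 0) by nra.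
  rewrite (Rabs_left u un) in hv.
  assert (hv1 : v <= c2 * - u) by (eapply Rle_trans; [apply Rle_abs|exact hv]).
  assert (hv2 : - v <= c2 * - u) by (eapply Rle_trans; [apply Rle_abs|rewrite Rabs_Ropp; exact hv]).
  split; nra.
Qed.

Lemma inner_eqr (M : RiemMfd) (g : forall x, tv M x) (y1 y2 : pt M) (h : y1 = y2)
  (V : tv M y2) : tinner (g y1) (eq_rect_r (tv M) V h) = tinner (g y2) V.
Proof. subst; reflexivity. Qed.

Lemma inner_r_add (M : RiemMfd) (x : pt M) (u v w : tv M x) :
  tinner u (tadd v w) = tinner u v + tinner u w.
Proof. rewrite tinner_sym, tinner_add, (tinner_sym _ _ v), (tinner_sym _ _ w); reflexivity. Qed.

Lemma inner_r_scal (M : RiemMfd) (x : pt M) a (u v : tv M x) :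
  tinner u (tscal a v) = a * tinner u v.
Proof. rewrite tinner_sym, tinner_scal, tinner_sym; reflexivity. Qed.

Lemma transport_bound (M : RiemMfd) (Rt : Retraction M) (x : pt M) a (eta : tv M x)
  (w : tv M (retr Rt x (tscal a eta))) :
  Rabs (tinner w (sfr_transport Rt x a eta)) <= Rabs (tinner w (dretr Rt x (tscal a eta) eta)).
Proof.
  unfold sfr_transport; simpl.
  destruct (Rle_dec _ _) as [h|h]; [lra|].
  rewrite inner_r_scal, Rabs_mult.
  apply Rnot_le_lt in h.
  assert (h0 : 0 <= tnorm eta) by (unfold tnorm; apply sqrt_pos).
  assert (hs : 0 <= tnorm eta / tnorm (dretr Rt x (tscal a eta) eta) <= 1).
  { split. unfold Rdiv; apply Rmult_le_pos; [lra|]; left; apply Rinv_0_lt_compat; lra.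
    apply (Rmult_le_reg_r (tnorm (dretr Rt x (tscal a eta) eta))); [lra|].
    unfold Rdiv; rewrite Rmult_assoc, Rinv_l by lra; lra. }
  rewrite Rabs_pos_eq by lra.
  assert (0 <= Rabs (tinner w (dretr Rt x (tscal a eta) eta))) by apply Rabs_pos.
  nra.
Qed.

Theorem mainTheorem3 (M : RiemMfd) (Rt : Retraction M) (f : pt M -> R)
  (g : forall x, tv M x) (hg : is_riem_grad Rt f g)
  (c1 c2 : R) (hc1 : 0 < c1) (hc12 : c1 < c2) (hc2 : c2 < 1/2)
  (xs : nat -> pt M) (etas : forall k, tv M (xs k)) (alphas : nat -> R)
  (hseq : sfr_sequence Rt f g c1 c2 xs etas alphas)
  (hnz : forall k, g (xs k) <> tzero (xs k)) :
  forall k : nat,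
    tinner (g (xs k)) (etas k) < 0 /\
    - (1 / (1 - c2)) <= tinner (g (xs k)) (etas k) / tinner (g (xs k)) (g (xs k)) /\
    tinner (g (xs k)) (etas k) / tinner (g (xs k)) (g (xs k)) <= (2 * c2 - 1) / (1 - c2).
Proof.
  destruct hseq as [h0 hs].
  assert (apos : forall k, 0 < tinner (g (xs k)) (g (xs k))) by (intro k; apply tinner_pos, hnz).
  assert (neg : (2 * c2 - 1) / (1 - c2) < 0).
  { unfold Rdiv. apply Rmult_neg_pos; [lra|]. apply Rinv_0_lt_compat; lra. }
  assert (inv : forall k,
    - (1 / (1 - c2)) <= tinner (g (xs k)) (etas k) / tinner (g (xs k)) (g (xs k)) /\
    tinner (g (xs k)) (etas k) / tinner (g (xs k)) (g (xs k)) <= (2 * c2 - 1) / (1 - c2)).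
  { induction k as [|k IH].
    - rewrite h0, inner_r_scal.
      assert (e : -1 * tinner (g (xs 0%nat)) (g (xs 0%nat)) / tinner (g (xs 0%nat)) (g (xs 0%nat)) = -1)
        by (field; specialize (apos 0%nat); lra).
      rewrite e. split.
      + assert (1 <= 1 / (1 - c2)).
        { apply (Rmult_le_reg_r (1 - c2)); [lra|].
          unfold Rdiv; rewrite Rmult_assoc, Rinv_l by lra; lra. }
        lra.
      + assert (e2 : (2 * c2 - 1) / (1 - c2) = -1 + c2 / (1 - c2)) by (field; lra).
        rewrite e2. assert (0 <= c2 / (1 - c2)).
        { unfold Rdiv; apply Rmult_le_pos; [lra|]; left; apply Rinv_0_lt_compat; lra. }
        lra.
    - destruct (hs k) as [ha [[_ hw] [hx he]]].
      rewrite he, inner_eqr.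
      cbv zeta.
      set (y := retr Rt (xs k) (tscal (alphas k) (etas k))) in *.
      set (T := sfr_transport Rt (xs k) (alphas k) (etas k)).
      rewrite inner_r_add, !inner_r_scal.
      pose proof (apos (S k)) as hb. pose proof (apos k) as ha'.
      rewrite hx in hb |- *.
      set (b := tinner (g y) (g y)) in *.
      set (a := tinner (g (xs k)) (g (xs k))) in *.
      set (p := tinner (g (xs k)) (etas k)) in *.
      set (q := tinner (g y) T).
      assert (e : (-1 * b + b / a * q) / b = -1 + q / a) by (field; lra).
      rewrite e.
      apply (step_arith c2 (p / a)); try lra; try apply IH.
      unfold Rdiv. rewrite !Rabs_mult, (Rabs_pos_eq (/ a)) by (left; apply Rinv_0_lt_compat; lra).
      assert (0 < / a) by (apply Rinv_0_lt_compat; lra).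
      assert (Rabs q <= c2 * Rabs p).
      { eapply Rle_trans; [apply transport_bound|exact hw]. }
      nra. }
  intro k. split; [|apply inv].
  destruct (inv k) as [_ hu].
  pose proof (apos k).
  assert (hlt : tinner (g (xs k)) (etas k) / tinner (g (xs k)) (g (xs k)) < 0) by lra.
  unfold Rdiv in hlt.
  assert (0 < / tinner (g (xs k)) (g (xs k))) by (apply Rinv_0_lt_compat; lra).
  nra.
Qed.
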